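(* Let $D(\mathbf x)\in\mathbb F^k[\mathbf x]$ have a cone-closed basis. Then $D$ is $(k+1)$-cone concentrated and $(\lg 2k)$-support concentrated.
   Context: For $D\in\mathbb F^k[\mathbf x]$, $\mathrm{lrsp}(D)$ is the span of its coefficient vectors in $\mathbb F^k$. A set of monomials is cone-closed if it contains all submonomials ($\mathbf x^{\mathbf e'}$ with $\mathbf e'\le\mathbf e$ coordinatewise) of each of its elements; $D$ has a cone-closed basis if some cone-closed set of monomials has coefficients forming a basis of $\mathrm{lrsp}(D)$. The cone-size of $\mathbf x^{\mathbf e}$ is $\prod_i(e_i+1)$; its support size is the number of $i$ with $e_i>0$. $D$ is $\ell$-cone concentrated (resp. $\ell$-support concentrated) if the coefficients of the monomials of cone-size $<\ell$ (resp. support size $<\ell$) span $\mathrm{lrsp}(D)$. *)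

(* Defs.v *)
From HB Require Import structures.
From mathcomp Require Import all_boot all_order all_algebra.
Set Implicit Arguments. Unset Strict Implicit. Unset Printing Implicit Defensive.
Import GRing.Theory.
Local Open Scope ring_scope.

(* Monomials x^e in n variables, represented by exponent vectors e : 'I_n -> nat. *)
Definition mon (n : nat) := {ffun 'I_n -> nat}.

(* A polynomial D in F^k[x_1..x_n] is a coefficient map D : mon n -> 'rV[F]_k
   together with a finite list s of monomials outside of which D vanishes. *)
Definition supported_in (F : fieldType) (n k : nat)
  (D : mon n -> 'rV[F]_k) (s : seq (mon n)) : Prop :=
  forall e, e \notin s -> D e = 0.

Definition lrsp (F : fieldType) (n k : nat) (D : mon n -> 'rV[F]_k) (s : seq (mon n)) :=
  (\sum_(e <- s) <<D e>>)%MS.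

Definition span_coef (F : fieldType) (n k : nat) (D : mon n -> 'rV[F]_k)
  (s : seq (mon n)) (P : pred (mon n)) :=
  (\sum_(e <- s | P e) <<D e>>)%MS.

Definition submon (n : nat) (e' e : mon n) : bool := [forall i, e' i <= e i]%N.

Definition cone_closed (n : nat) (B : seq (mon n)) : Prop :=
  forall e e', e \in B -> submon e' e -> e' \in B.

Definition coef_basis (F : fieldType) (n k : nat) (D : mon n -> 'rV[F]_k)
  (s : seq (mon n)) (B : seq (mon n)) : Prop :=
  [/\ uniq B,
      row_free (\matrix_(i < size B) D (nth [ffun=> 0%N] B i)) &
      (\matrix_(i < size B) D (nth [ffun=> 0%N] B i) == lrsp D s)%MS].

Definition has_cone_closed_basis (F : fieldType) (n k : nat)
  (D : mon n -> 'rV[F]_k) (s : seq (mon n)) : Prop :=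
  exists B : seq (mon n), cone_closed B /\ coef_basis D s B.

Definition cone_size (n : nat) (e : mon n) : nat := (\prod_(i < n) (e i).+1)%N.
Definition supp_size (n : nat) (e : mon n) : nat := #|[pred i | 0 < e i]%N|.

Definition cone_concentrated (F : fieldType) (n k : nat) (D : mon n -> 'rV[F]_k)
  (s : seq (mon n)) (l : nat) : Prop :=
  (span_coef D s (fun e => cone_size e < l)%N == lrsp D s)%MS.

(* support size < lg(2k)  <=>  2^(support size) < 2k  (support size is an integer) *)
Definition support_concentrated_lg2k (F : fieldType) (n k : nat)
  (D : mon n -> 'rV[F]_k) (s : seq (mon n)) : Prop :=
  (span_coef D s (fun e => 2 ^ supp_size e < 2 * k)%N == lrsp D s)%MS.

(* Main.v *)
Require Import Defs.
From HB Require Import structures.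
From mathcomp Require Import all_boot all_order all_algebra.

Lemma card_le_ord M a : (a < M)%N -> #|[pred j : 'I_M | (j <= a)%N]| = a.+1.
Proof.
move=> H.
rewrite -[a.+1]card_ord -(@card_codom _ _ (widen_ord H)); last by move=> x y /(congr1 val) /= /val_inj.
apply: eq_card => j; rewrite inE; apply/idP/codomP.
  move=> ja; exists (Ordinal (ja : j < a.+1)%N); apply: val_inj => //.
by move=> [x ->] /=; rewrite -ltnS.
Qed.

Lemma cone_bound n (B : seq (mon n)) (e : mon n) :
  cone_closed B -> e \in B -> (cone_size e <= size B)%N.
Proof.
move=> cc eB.
set N := (\max_(i < n) e i)%N.
pose F := fun i : 'I_n => [pred j : 'I_N.+1 | (j <= e i)%N].
pose lf := fun f : {ffun 'I_n -> 'I_N.+1} => [ffun i => nat_of_ord (f i)] : mon n.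
have lfI : injective lf.
  move=> f1 f2 /ffunP H; apply/ffunP=> i; apply: val_inj.
  by have := H i; rewrite !ffunE.
have -> : cone_size e = #|(family F : simpl_pred {ffun 'I_n -> 'I_N.+1})|.
  rewrite card_family /cone_size /image_mem -big_enum /= enumT.
  elim: (Finite.enum _) => [|i r IH] /=; rewrite ?big_nil ?big_cons ?IH //.
  congr (_ * _)%N; rewrite card_le_ord // ltnS.
  exact: (leq_bigmax i).
rewrite cardE -(size_map lf).
apply: uniq_leq_size; first by rewrite (map_inj_uniq lfI) enum_uniq.
move=> x /mapP [f]; rewrite mem_enum => /familyP Hf ->.
apply: (cc e) => //; apply/forallP => i; rewrite ffunE; exact: Hf.
Qed.

Lemma two_supp n (e : mon n) : (2 ^ supp_size e <= cone_size e)%N.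
Proof.
rewrite /supp_size /cone_size -prod_nat_const big_mkcond /=.
apply: leq_prod => i _; rewrite inE; by case: (e i).
Qed.

Lemma sum_filter_sub (F : fieldType) k (T : eqType) (s : seq T) (P : pred T)
  (A : T -> 'rV[F]_k) :
  (\sum_(e <- s | P e) <<A e>> <= \sum_(e <- s) <<A e>>)%MS.
Proof.
elim: s => [|x s IH]; rewrite ?big_nil ?big_cons //.
case: (P x).
  exact: addsmxS.
exact: submx_trans IH (addsmxSr _ _).
Qed.

Lemma mem_sum_sub (F : fieldType) k (T : eqType) (s : seq T) (P : pred T)
  (A : T -> 'rV[F]_k) x :
  x \in s -> P x -> (A x <= \sum_(e <- s | P e) <<A e>>)%MS.
Proof.
move=> xs Px; elim: s xs => [|y s IH] //; rewrite inE big_cons => /orP [/eqP <-|xs].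
  by rewrite Px; apply: submx_trans (addsmxSl _ _); rewrite genmxE.
case: (P y); last exact: IH.
exact: submx_trans (IH xs) (addsmxSr _ _).
Qed.

Theorem lemma4p1 (F : fieldType) (n k : nat) (D : mon n -> 'rV[F]_k) (s : seq (mon n)) :
  supported_in D s ->
  has_cone_closed_basis D s ->
  cone_concentrated D s k.+1 /\ support_concentrated_lg2k D s.
Proof.
move=> supp [B [cc [uB rf eqM]]].
have szB : (size B <= k)%N.
  move: rf; rewrite /row_free => /eqP <-; exact: rank_leq_col.
have key : forall P : pred (mon n), (forall e, e \in B -> P e) ->
    (span_coef D s P == lrsp D s)%MS.
  move=> P HP; apply/andP; split; first exact: sum_filter_sub.
  move/andP: eqM => [_ H]; apply: submx_trans H _.
  apply/row_subP => i; rewrite rowK.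
  have bB : nth [ffun=> 0%N] B i \in B by rewrite mem_nth.
  case: (boolP (nth [ffun=> 0%N] B i \in s)) => bs.
    exact: mem_sum_sub bs (HP _ bB).
  by rewrite supp // sub0mx.
split.
  apply: key => e eB; rewrite ltnS; apply: leq_trans szB; exact: cone_bound.
apply: key => e eB.
have h : (2 ^ supp_size e <= k)%N.
  apply: leq_trans szB; have h1 := @two_supp n e; have h2 := @cone_bound n B e cc eB; apply: (leq_trans h1 h2).
have kpos : (0 < k)%N by apply: leq_trans h; rewrite expn_gt0.
apply: (leq_ltn_trans h); rewrite mul2n -addnn -{1}[k]addn0 ltn_add2l //.
Qed.
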